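(* Let $\mathfrak A$ be an associative $\mathcal A$-algebra with finite basis $B$ compatible with $1$, satisfying $P_1,P_2,P_3$, and let $\Phi:\mathfrak A\to\mathfrak A^\infty_{\mathcal A}=\mathcal A\otimes_{\mathbb Z}\mathfrak A^\infty$ be the $\mathcal A$-linear map $\Phi(b)=\sum_{b_1\in\mathcal D,\,b_2\in B,\,b_1\sim b_2}r^{b_2}_{b,b_1}t_{b_2}$. Make $\mathfrak A$ a left $\mathfrak A^\infty_{\mathcal A}$-module by $t_b*b'=\sum_{b''\in B}\gamma^{b''}_{b,b'}b''$. Then for all $x\in\mathfrak A$ and $b\in B$ we have $xb\equiv\Phi(x)*b\pmod{\mathfrak A_{\prec b}}$, where $\mathfrak A_{\prec b}=\bigoplus_{b'\in B,\,b'\prec b}\mathcal Ab'$.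
   Context: $\mathcal A=\mathbb Z[v,v^{-1}]$. $B$ compatible with $1$: $1=\sum_\mu 1_\mu$ with distinct $1_\mu\in B$, $1_\mu1_{\mu'}=\delta_{\mu\mu'}1_\mu$, and every $b\in B$ satisfies $1_\mu b1_{\mu'}=b$ for some $\mu,\mu'$. Write $bb'=\sum_{b''}r^{b''}_{b,b'}b''$ with $r^{b''}_{b,b'}\in\mathcal A$. $b'\preceq b$ iff $b'$ lies in every $K\subset B$ with $b\in K$ and $\sum_{b_1\in K}\mathcal Ab_1$ a two-sided ideal; $b\sim b'$ iff $b\preceq b'\preceq b$ (two-sided cells); $b'\prec b$ iff $b'\preceq b$ and $b'\not\sim b$. $a(b)$: least $m\ge0$ with $v^{-m}r^{b''}_{b,b'}\in\mathbb Z[v^{-1}]$ for all $b',b''$ in the cell of $b$. $P_1$: $a$ constant on cells. $\gamma^{b''}_{b,b'}\in\mathbb Z$: $v^{-a(b)}r^{b''}_{b,b'}\equiv\gamma^{b''}_{b,b'}\bmod v^{-1}\mathbb Z[v^{-1}]$ if $b,b',b''$ lie in one cell, $0$ otherwise; $\mathfrak A^\infty$ is the ring with $\mathbb Z$-basis $\{t_b\}$ and $t_bt_{b'}=\sum\gamma^{b''}_{b,b'}t_{b''}$. $P_2$: $\mathfrak A^\infty$ has a unit $\sum_{b\in\mathcal D}t_b$ for some $\mathcal D\subset B$ (distinguished elements), compatible with the basis. $P_3$: for $b_2\sim b_4$, $\sum_{\beta\sim b_2}r^\beta_{b_1,b_2}(v)r^{b_4}_{\beta,b_3}(v')=\sum_{\beta\sim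 b_2}r^{b_4}_{b_1,\beta}(v)r^\beta_{b_2,b_3}(v')$ with $v'$ an independent indeterminate. *)

(* Defs.v *)
From HB Require Import structures.
From mathcomp Require Import all_boot all_order all_algebra.
From mathcomp Require Import finmap.
From mathcomp Require Import monalg.

Set Implicit Arguments.
Unset Strict Implicit.
Unset Printing Implicit Defensive.

Import GRing.Theory.
Local Open Scope fset_scope.
Local Open Scope ring_scope.

(* Group algebra R[Z] = R[v, v^-1] : finitely supported functions int -> R,
   g@_k = coefficient of v^k. *)
Section LaurentRing.
Context (R : nzRingType).
Implicit Types (g : {malg R[int]}).

Local Notation "g1 *M_[ k1 , k2 ] g2" :=
  << g1@_k1 * g2@_k2 *g (k1 + k2)%R >>
  (at level 40, no associativity, format "g1  *M_[ k1 ,  k2 ]  g2").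

Definition lone : {malg R[int]} := << 1 *g 0%R >>.

Definition lmul g1 g2 : {malg R[int]} :=
  \sum_(k1 <- msupp g1) \sum_(k2 <- msupp g2) g1 *M_[k1, k2] g2.

Lemma lmullw (d1 d2 : {fset int}) g1 g2 :
  msupp g1 `<=` d1 -> msupp g2 `<=` d2 ->
  lmul g1 g2 = \sum_(k1 <- d1) \sum_(k2 <- d2) g1 *M_[k1, k2] g2.
Proof.
move=> le_d1 le_d2; rewrite /lmul (big_fset_incl _ le_d1) /=.
  apply/eq_bigr=> k1 _; apply/big_fset_incl => // k _ /mcoeff_outdom ->.
  by rewrite mulr0 monalgU0.
move=> k _ /mcoeff_outdom g1k.
by rewrite big1 => // k' _; rewrite g1k mul0r monalgU0.
Qed.

Lemma lmulrw (d1 d2 : {fset int}) g1 g2 : msupp g1 `<=` d1 -> msupp g2 `<=` d2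
  -> lmul g1 g2 = \sum_(k2 <- d2) \sum_(k1 <- d1) g1 *M_[k1, k2] g2.
Proof. by move=> le_d1 le_d2; rewrite (lmullw le_d1 le_d2) exchange_big. Qed.

Lemma lmul0g : left_zero 0 lmul.
Proof. by move=> g; rewrite /lmul msupp0 big_seq_fset0. Qed.

Lemma lmulg0 : right_zero 0 lmul.
Proof. by move=> g; rewrite (lmulrw (fsubset_refl _) (fsubset_refl _)) msupp0 big_seq_fset0. Qed.

Lemma lmulUg c k g :
  lmul << c *g k >> g = \sum_(k' <- msupp g) << c * g@_k' *g (k + k')%R >>.
Proof.
rewrite (lmullw msuppU_le (fsubset_refl _)) big_seq_fset1.
by apply/eq_bigr => k' _; rewrite mcoeffUU.
Qed.

Lemma lmulgU c k g :
  lmul g << c *g k >> = \sum_(k' <- msupp g) << g@_k' * c *g (k' + k)%R >>.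
Proof.
rewrite (lmulrw (fsubset_refl _) msuppU_le) big_seq_fset1.
by apply/eq_bigr=> k' _; rewrite mcoeffUU.
Qed.

Lemma lmulUU c1 c2 k1 k2 :
  lmul << c1 *g k1 >> << c2 *g k2 >> = << c1 * c2 *g (k1 + k2)%R >>.
Proof. by rewrite (lmulrw msuppU_le msuppU_le) !big_seq_fset1 !mcoeffUU. Qed.

Lemma lmulEl1 g1 g2 :
  lmul g1 g2 = \sum_(k1 <- msupp g1) lmul << g1@_k1 *g k1 >> g2.
Proof. by apply/eq_bigr=> k _; rewrite lmulUg. Qed.

Lemma lmulEr1 g1 g2 :
  lmul g1 g2 = \sum_(k2 <- msupp g2) lmul g1 << g2@_k2 *g k2 >>.
Proof.
rewrite (lmulrw (fsubset_refl _) (fsubset_refl _)).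
by apply/eq_bigr=> k _; rewrite lmulgU.
Qed.

Lemma lmul1g : left_id lone lmul.
Proof.
move=> g; rewrite lmulUg [RHS]monalgE.
by apply/eq_bigr=> kg _; rewrite mul1r add0r.
Qed.

Lemma lmulg1 : right_id lone lmul.
Proof.
move=> g; rewrite lmulgU [RHS]monalgE.
by apply/eq_bigr=> k _; rewrite mulr1 addr0.
Qed.

Lemma lmulgDl : left_distributive lmul +%R.
Proof.
move=> g1 g2 g; rewrite [in RHS](@lmullw _ (msupp g) _ _ (fsubsetUl _ (msupp g2)) (fsubset_refl _)).
rewrite [in RHS](@lmullw _ (msupp g) _ _ (fsubsetUr (msupp g1) _) (fsubset_refl _)).
rewrite (@lmullw _ (msupp g) _ _ (msuppD_le _ _) (fsubset_refl _)).
rewrite -big_split /=; apply/eq_bigr=> k1 _.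
rewrite -big_split /=; apply/eq_bigr=> k2 _.
by rewrite mcoeffD mulrDl monalgUD.
Qed.

Lemma lmulgDr : right_distributive lmul +%R.
Proof.
move=> g g1 g2; rewrite [in RHS](@lmulrw (msupp g) _ _ _ (fsubset_refl _) (fsubsetUl _ (msupp g2))).
rewrite [in RHS](@lmulrw (msupp g) _ _ _ (fsubset_refl _) (fsubsetUr (msupp g1) _)).
rewrite (@lmulrw (msupp g) _ _ _ (fsubset_refl _) (msuppD_le _ _)).
rewrite -big_split /=; apply/eq_bigr => k1 _.
rewrite -big_split /=; apply/eq_bigr => k2 _.
by rewrite mcoeffD mulrDr monalgUD.
Qed.

Lemma lmulA : associative lmul.
Proof.
move=> g1 g2 g3.
rewrite [RHS](big_morph (lmul^~ _) (fun _ _ => lmulgDl _ _ _) (lmul0g _)).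
rewrite lmulEl1; apply/eq_bigr=> k1 _.
rewrite [LHS](big_morph (lmul _) (fun _ _ => lmulgDr _ _ _) (lmulg0 _)).
rewrite [RHS](big_morph (lmul^~ _) (fun _ _ => lmulgDl _ _ _) (lmul0g _)).
apply/eq_bigr=> k2 _.
rewrite [LHS](big_morph (lmul _) (fun _ _ => lmulgDr _ _ _) (lmulg0 _)).
by rewrite lmulEr1; apply/eq_bigr=> k3 _; rewrite !lmulUU mulrA addrA.
Qed.

Lemma lone_neq0 : lone != 0.
Proof. by apply/eqP/malgP=> /(_ 0%R) /eqP; rewrite mcoeffUU mcoeff0 oner_eq0. Qed.

End LaurentRing.

(* A fresh head constant, so that the ring structure below does not clash
   with the canonical structures of multinomials (which are keyed on malg). *)
Definition lpoly (R : nzRingType) : predArgType := {malg R[int]}.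
HB.instance Definition _ (R : nzRingType) := GRing.Zmodule.on (lpoly R).

HB.instance Definition _ (R : nzRingType) := GRing.Zmodule_isNzRing.Build (lpoly R)
  (@lmulA R) (@lmul1g R) (@lmulg1 R) (@lmulgDl R) (@lmulgDr R) (@lone_neq0 R).

Lemma lpolyM_def (R : nzRingType) (g1 g2 : lpoly R) : g1 * g2 = lmul g1 g2.
Proof. by []. Qed.

Lemma lpolyC (R : comNzRingType) : @commutative (lpoly R) _ *%R.
Proof.
move=> g1 g2; rewrite !lpolyM_def /lmul exchange_big /=.
by apply/eq_bigr=> k1 _; apply/eq_bigr=> k2 _; rewrite mulrC addrC.
Qed.

HB.instance Definition _ (R : comNzRingType) :=
  GRing.PzRing_hasCommutativeMul.Build (lpoly R) (@lpolyC R).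

(* The ring A = Z[v, v^-1]; for x : laurent, x@_k is the coefficient of v^k. *)
Definition laurent : comNzRingType := lpoly int.

(* An algebra with basis B over a commutative ring R is encoded by its      *)
(* structure constants c : B -> B -> B -> R, where c b b' b'' is the        *)
(* coefficient of b'' in the product b b' (the paper's r^{b''}_{b,b'}).     *)
(* Elements of the algebra are coefficient vectors {ffun B -> R}.           *)
Section StructConst.
Context {B : finType} {R : comNzRingType}.
Implicit Types (c : B -> B -> B -> R) (U K : {set B}) (x y : {ffun B -> R}).

Definition bvec (b : B) : {ffun B -> R} := [ffun b' => (b' == b)%:R].

Definition amul c x y : {ffun B -> R} :=
  [ffun b'' => \sum_b \sum_b' x b * y b' * c b b' b''].

Definition sc_assoc c : Prop :=
  forall b1 b2 b3 b4 : B,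
    \sum_beta c b1 b2 beta * c beta b3 b4 = \sum_beta c b2 b3 beta * c b1 beta b4.

(* "B compatible with 1": 1 = sum_{u in U} u (U a set of distinct basis
   elements) is a two-sided unit, the u in U are pairwise orthogonal
   idempotents, and every b satisfies u b u' = b for some u, u' in U. *)
Definition sc_compatible_one c U : Prop :=
  [/\ (forall b b'', \sum_(u in U) c u b b'' = (b == b'')%:R),
      (forall b b'', \sum_(u in U) c b u b'' = (b == b'')%:R),
      (forall u u' b'', u \in U -> u' \in U ->
          c u u' b'' = ((u == u') && (u == b''))%:R)
    & (forall b, exists2 u, u \in U & exists2 u', u' \in U &
          forall b'', \sum_beta c u b beta * c beta u' b'' = (b == b'')%:R)].

Definition in_span K x : Prop := forall b, b \notin K -> x b = 0.

Definition ideal_span c K : Prop :=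
  forall x y, in_span K y -> in_span K (amul c x y) /\ in_span K (amul c y x).

Definition ideal_spanb c K : bool :=
  [forall b1 in K, forall b, forall b'' in ~: K,
     (c b b1 b'' == 0) && (c b1 b b'' == 0)].

Lemma bvec_in_span K b : b \in K -> in_span K (bvec b).
Proof. by move=> bK b' b'K; rewrite ffunE; case: eqP => // eb; rewrite eb bK in b'K. Qed.

Lemma amul_bvec c b1 b2 b'' : amul c (bvec b1) (bvec b2) b'' = c b1 b2 b''.
Proof.
rewrite ffunE (bigD1 b1) //=.
have -> : \sum_(i | i != b1) \sum_b' bvec b1 i * bvec b2 b' * c i b' b'' = 0.
  by apply: big1 => b nb; apply: big1 => b' _; rewrite ffunE (negbTE nb) !mul0r.
rewrite addr0 (bigD1 b2) //=.
have -> : \sum_(i | i != b2) bvec b1 b1 * bvec b2 i * c b1 i b'' = 0.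
  by apply: big1 => b nb; rewrite [bvec b2 b]ffunE (negbTE nb) mulr0 mul0r.
by rewrite !ffunE !eqxx !mul1r addr0.
Qed.

Lemma ideal_spanP c K : reflect (ideal_span c K) (ideal_spanb c K).
Proof.
apply: (iffP idP) => [/forallP H x y yK | H].
  have key b b1 b'' : b'' \notin K -> (c b b1 b'' * y b1 = 0) /\ (y b1 * c b1 b b'' = 0).
    move=> nK; case: (boolP (b1 \in K)) => b1K; last by rewrite yK // mulr0 mul0r.
    have /forallP/(_ b)/forall_inP/(_ b'') := (implyP (H b1) b1K).
    by rewrite in_setC => /(_ nK) /andP[/eqP -> /eqP ->]; rewrite mul0r mulr0.
  split=> b'' nK; rewrite ffunE big1 // => b _; rewrite big1 // => b' _.
    by rewrite -mulrA [y b' * _]mulrC (proj1 (key b b' b'' nK)) mulr0.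
  by rewrite -mulrA [x b' * _]mulrC mulrA (proj2 (key b' b b'' nK)) mul0r.
apply/forallP=> b1; apply/implyP=> b1K; apply/forallP=> b; apply/forall_inP=> b''.
rewrite in_setC => nK; have [H1 H2] := H (bvec b) (bvec b1) (bvec_in_span b1K).
by rewrite -!(amul_bvec c) (H1 _ nK) (H2 _ nK) eqxx.
Qed.

Definition preceq c (b' b : B) : bool :=
  [forall K : {set B}, ((b \in K) && ideal_spanb c K) ==> (b' \in K)].

Definition cell c (b b' : B) : bool := preceq c b b' && preceq c b' b.

Definition prec c (b' b : B) : bool := preceq c b' b && ~~ cell c b' b.

End StructConst.

Definition vpow (n : int) : laurent := << (1 : int) *g n >>.

Definition in_Zvinv (x : laurent) : Prop := forall k : int, 0 < k -> x@_k = 0.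

Section Afun.
Context {B : finType} (r : B -> B -> B -> laurent).

Definition a_ok (b : B) (m : nat) : Prop :=
  forall b' b'', cell r b' b -> cell r b'' b -> in_Zvinv (vpow (- m%:Z) * r b b' b'').

Definition is_a_function (a : B -> nat) : Prop :=
  forall b, a_ok b (a b) /\ (forall m, a_ok b m -> (a b <= m)%N).

Definition P1 (a : B -> nat) : Prop := forall b b', cell r b b' -> a b = a b'.

(* gamma^{b''}_{b,b'}: the constant term of v^{-a(b)} r^{b''}_{b,b'}
   (which lies in Z[v^-1]), i.e. the integer congruent to it mod
   v^-1 Z[v^-1], if b, b', b'' lie in one cell, and 0 otherwise. *)
Definition gamma (a : B -> nat) (b b' b'' : B) : int :=
  if cell r b b' && cell r b b'' then (vpow (- (a b)%:Z) * r b b' b'')@_0%R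
  else 0.

(* P2: the ring A^oo (basis t_b, structure constants gamma) has a unit
   sum_{d in D} t_d, the basis {t_b} being compatible with it. *)
Definition P2 (a : B -> nat) (D : {set B}) : Prop :=
  sc_compatible_one (gamma a) D.

(* x(v) and x(v') as elements of Z[v^+-1][v'^+-1] = lpoly laurent *)
Definition at_v (x : laurent) : lpoly laurent := << x *g 0%R >>.
Definition at_v' (x : laurent) : lpoly laurent :=
  \sum_(k <- msupp x) << (x@_k)%:~R *g k >>.

Definition P3 : Prop :=
  forall b1 b2 b3 b4 : B, cell r b2 b4 ->
    \sum_(beta | cell r beta b2) at_v (r b1 b2 beta) * at_v' (r beta b3 b4)
  = \sum_(beta | cell r beta b2) at_v (r b1 beta b4) * at_v' (r b2 b3 beta).

(* Phi(x) in A (x) A^oo, as coefficient vector on the basis {t_b};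
   Phi(b) = sum_{b1 in D, b2 in B, b1 ~ b2} r^{b2}_{b,b1} t_{b2}, extended
   A-linearly. *)
Definition Phi (D : {set B}) (x : {ffun B -> laurent}) : {ffun B -> laurent} :=
  [ffun b2 => \sum_b x b * \sum_(b1 in D | cell r b1 b2) r b b1 b2].

Definition act (a : B -> nat) (y z : {ffun B -> laurent}) : {ffun B -> laurent} :=
  [ffun b'' => \sum_b \sum_b' y b * z b' * (gamma a b b' b'')%:~R].

Definition in_prec_span (b : B) (z : {ffun B -> laurent}) : Prop :=
  forall b', ~~ prec r b' b -> z b' = 0.

End Afun.

(* Main.v *)
Require Import Defs.
From HB Require Import structures.
From mathcomp Require Import all_boot all_order all_algebra.
From mathcomp Require Import finmap monalg.
Set Implicit Arguments.
Unset Strict Implicit.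
Unset Printing Implicit Defensive.
Import GRing.Theory.
Local Open Scope ring_scope.

Lemma sum_U_coef (R : nzRingType) (s : seq int) (F : int -> R) k :
  uniq s -> (k \notin s -> F k = 0) ->
  (\sum_(k' <- s) << F k' *g k' >> : {malg R[int]})@_k = F k.
Proof.
move=> us Fk; rewrite raddf_sum /=.
under eq_bigr do rewrite mcoeffU.
case: (boolP (k \in s)) => ks.
  rewrite (bigD1_seq k) //= eqxx big1 ?addr0 // => i /negbTE ->; by [].
rewrite Fk // big1_seq // => i /andP[_ iks].
have /negbTE -> : i != k by apply: contraNneq ks => <-.
by rewrite mulr0n.
Qed.

Lemma coef_atv' (q : laurent) k : (at_v' q)@_k = (q@_k)%:~R.
Proof.
rewrite /at_v' (sum_U_coef (F:=fun k => (q@_k)%:~R)) ?fset_uniq //.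
by move=> /mcoeff_outdom ->.
Qed.

Lemma coef_atvv' (p q : laurent) k : (at_v p * at_v' q)@_k = p * (q@_k)%:~R.
Proof.
rewrite lpolyM_def /at_v lmulUg.
under eq_bigr do rewrite add0r.
rewrite (sum_U_coef (F:=fun k' => p * (at_v' q)@_k')) ?coef_atv' ?fset_uniq //.
by move=> /mcoeff_outdom; rewrite coef_atv' => ->; rewrite mulr0.
Qed.

Lemma coef_vpow (n k : int) (g : laurent) : (vpow n * g)@_k = g@_(k - n).
Proof.
rewrite /vpow lpolyM_def lmulUg.
have -> : \sum_(k' <- msupp g) << 1 * g@_k' *g (n + k')%R >> =
   \sum_(k' <- msupp g) << g@_k' *g (n + k')%R >> :> {malg int[int]}.
  by apply: eq_bigr => i _; rewrite mul1r.
rewrite raddf_sum /=.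
under eq_bigr do rewrite mcoeffU.
case: (boolP (k - n \in msupp g)) => ks.
  rewrite (bigD1_seq (k - n)) //=; last exact: fset_uniq.
  rewrite [n + _]addrC subrK eqxx big1 ?addr0 // => i ni.
  have /negbTE -> : (n + i != k)%R by apply: contra ni => /eqP <-; rewrite addrC addKr.
  by [].
rewrite (mcoeff_outdom ks) big1_seq // => i /andP[_ iks].
have /negbTE -> : (n + i != k)%R by apply: contraNneq ks => <-; rewrite addrC addKr.
by rewrite mulr0n.
Qed.

Section Cells.
Context {B : finType} {R : comNzRingType} (c : B -> B -> B -> R).

Lemma preceq_refl b : preceq c b b.
Proof. by apply/forallP => K; apply/implyP => /andP[]. Qed.

Lemma preceq_trans b1 b2 b3 : preceq c b1 b2 -> preceq c b2 b3 -> preceq c b1 b3.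
Proof.
move=> /forallP H12 /forallP H23; apply/forallP => K; apply/implyP => /andP[h3 hK].
have h2 := implyP (H23 K) (introT andP (conj h3 hK)).
exact: implyP (H12 K) (introT andP (conj h2 hK)).
Qed.

Lemma cell_refl b : cell c b b.
Proof. by rewrite /cell preceq_refl. Qed.

Lemma cellC b b' : cell c b b' = cell c b' b.
Proof. by rewrite /cell andbC. Qed.

Lemma cell_trans b1 b2 b3 : cell c b1 b2 -> cell c b2 b3 -> cell c b1 b3.
Proof.
move=> /andP[h12 h21] /andP[h23 h32]; apply/andP; split.
  exact: preceq_trans h12 h23.
exact: preceq_trans h32 h21.
Qed.

Lemma cell_preceq b b' : cell c b b' -> preceq c b b'.
Proof. by case/andP. Qed.

Lemma c_preceq b' b b'' : c b' b b'' != 0 -> preceq c b'' b.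
Proof.
move=> nz; apply/forallP => K; apply/implyP => /andP[bK /forallP H].
apply: contraR nz => nK.
have /forallP/(_ b')/forall_inP/(_ b'') := implyP (H b) bK.
by rewrite in_setC => /(_ nK) /andP[/eqP -> _].
Qed.

Lemma sum_bvec (F : B -> R) b : \sum_b' bvec b b' * F b' = F b.
Proof.
rewrite (bigD1 b) //= big1 ?addr0 ?ffunE ?eqxx ?mul1r // => i ni.
by rewrite ffunE (negbTE ni) mul0r.
Qed.

Lemma amul_bvecr x b b'' : amul c x (bvec b) b'' = \sum_b0 x b0 * c b0 b b''.
Proof.
rewrite ffunE; apply: eq_bigr => b0 _.
rewrite -(sum_bvec (fun b' => x b0 * c b0 b' b'')).
by apply: eq_bigr => b' _; rewrite mulrA [x b0 * _]mulrC.
Qed.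
End Cells.

Lemma act_bvecr (B : finType) (r : B -> B -> B -> laurent) a y b b'' :
  act r a y (bvec b) b'' = \sum_b2 y b2 * (gamma r a b2 b b'')%:~R.
Proof.
rewrite ffunE; apply: eq_bigr => b2 _.
rewrite -(sum_bvec (fun b' => y b2 * (gamma r a b2 b' b'')%:~R)).
by apply: eq_bigr => b' _; rewrite mulrA [y b2 * _]mulrC.
Qed.

Lemma gamma_cell (B : finType) (r : B -> B -> B -> laurent) a b1 b2 b3 :
  P1 r a -> cell r b1 b2 -> cell r b1 b3 ->
  gamma r a b1 b2 b3 = (r b1 b2 b3)@_((a b2)%:Z).
Proof.
move=> P1a h12 h13; rewrite /gamma h12 h13 /= coef_vpow sub0r opprK.
by rewrite (P1a _ _ h12).
Qed.

Lemma lcoef_sum (I : finType) (P : pred I) (F : I -> lpoly laurent) (k : int) :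
  (\sum_(i | P i) F i)@_k = \sum_(i | P i) (F i)@_k.
Proof.
elim/big_rec2: _ => [|i y1 y2 _ <-]; first exact: mcoeff0.
exact: mcoeffD.
Qed.
Lemma P3_coef (B : finType) (r : B -> B -> B -> laurent) b0 d b b'' (k : int) :
  P3 r -> cell r d b'' ->
  \sum_(beta | cell r beta d) r b0 d beta * ((r beta b b'')@_k)%:~R
  = \sum_(beta | cell r beta d) r b0 beta b'' * ((r d b beta)@_k)%:~R.
Proof.
move=> /(_ b0 d b b'') H3 hc.
have E := congr1 (fun p : lpoly laurent => p@_k) (H3 hc).
have L1 := lcoef_sum (fun beta => cell r beta d) (fun beta => at_v (r b0 d beta) * at_v' (r beta b b'')) k.
have L2 := lcoef_sum (fun beta => cell r beta d) (fun beta => at_v (r b0 beta b'') * at_v' (r d b beta)) k.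
transitivity (\sum_(beta | cell r beta d) (at_v (r b0 d beta) * at_v' (r beta b b''))@_k).
  by apply: eq_bigr => beta _; rewrite coef_atvv'.
transitivity (\sum_(beta | cell r beta d) (at_v (r b0 beta b'') * at_v' (r d b beta))@_k); last first.
  by apply: eq_bigr => beta _; rewrite coef_atvv'.
exact: (etrans (esym L1) (etrans E L2)).
Qed.

Lemma key (B : finType) (r : B -> B -> B -> laurent) a (D : {set B}) b0 b b'' :
  P1 r a -> P2 r a D -> P3 r -> ~~ prec r b'' b ->
  r b0 b b'' = \sum_b2 (\sum_(b1 in D | cell r b1 b2) r b0 b1 b2) * (gamma r a b2 b b'')%:~R.
Proof.
move=> P1a P2a P3r np.
case: (boolP (preceq r b'' b)) => hp; last first.
  have -> : r b0 b b'' = 0 by apply/eqP; apply: contraR hp => /c_preceq.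
  symmetry; apply: big1 => b2 _; rewrite /gamma.
  case: (boolP (cell r b2 b && cell r b2 b'')) => [/andP[h1 h2]|]; last by rewrite mulr0.
  case/negP: hp; apply: cell_preceq; apply: (@cell_trans _ _ r b'' b2 b) => //.
  by rewrite cellC.
have hc : cell r b'' b by move: np; rewrite /prec hp /= negbK.
set A := (a b)%:Z.
pose Fd d := \sum_(beta | cell r beta d) r b0 d beta * ((r beta b b'')@_A)%:~R.
pose Gd d := \sum_(beta | cell r beta d) r b0 beta b'' * ((r d b beta)@_A)%:~R.
have E : \sum_(d in D | cell r d b) Fd d = \sum_(d in D | cell r d b) Gd d.
  apply: eq_bigr => d /andP[_ hd]; apply: P3_coef => //.
  by apply: (cell_trans hd); rewrite cellC.
have HR : \sum_(d in D | cell r d b) Gd d = r b0 b b''.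
  transitivity (\sum_(d in D | cell r d b) \sum_(beta | cell r beta b)
                   r b0 beta b'' * ((r d b beta)@_A)%:~R).
    apply: eq_bigr => d /andP[_ hd]; apply: eq_bigl => beta.
    apply/idP/idP => h; first exact: cell_trans h hd.
    by apply: (cell_trans h); rewrite cellC.
  rewrite exchange_big /=.
  transitivity (\sum_(beta | cell r beta b) r b0 beta b'' * ((b == beta)%:R)).
    apply: eq_bigr => beta hb; rewrite -mulr_sumr; congr (_ * _).
    case: P2a => P2u _ _ _.
    rewrite -[X in _ = X]mulrz_nat -P2u rmorph_sum /= big_mkcondr /=.
    apply: eq_bigr => d dD; case: ifP => hd.
      rewrite gamma_cell //; apply: (cell_trans hd); by rewrite cellC.
    rewrite /gamma hd /=; by [].
  rewrite (bigD1 b) ?cell_refl //= eqxx mulr1 big1 ?addr0 // => beta /andP[_ nb].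
  by rewrite eq_sym (negbTE nb) mulr0.
rewrite -HR -E; symmetry.
under eq_bigr do rewrite mulr_suml.
rewrite (exchange_big_dep (fun b1 => b1 \in D)) /=; last by move=> ? ? _ /andP[].
rewrite [RHS]big_mkcondr /=.
apply: eq_bigr => d dD; case: ifP => hd.
  rewrite /Fd; apply: eq_big => [beta|beta]; first by rewrite dD /= cellC.
  move=> /andP[_ hdb].
  have hbb : cell r beta b by apply: (cell_trans _ hd); rewrite cellC.
  rewrite gamma_cell //; apply: (cell_trans hbb); by rewrite cellC.
apply: big1 => b2 /andP[_ hdb2]; rewrite /gamma.
case: ifP => [/andP[h1 _]|_]; last by rewrite mulr0.
by rewrite (cell_trans hdb2 h1) in hd.
Qed.

Theorem mainTheorem6 (B : finType) (r : B -> B -> B -> laurent)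
    (U : {set B}) (a : B -> nat) (D : {set B}) :
  sc_assoc r -> sc_compatible_one r U ->
  is_a_function r a -> P1 r a -> P2 r a D -> P3 r ->
  forall (x : {ffun B -> laurent}) (b : B),
    in_prec_span r b (amul r x (bvec b) - act r a (Phi r D x) (bvec b)).
Proof.
move=> _ _ _ P1a P2a P3r x b b'' np.
rewrite ffunE amul_bvecr ffunE act_bvecr; apply/eqP; rewrite addr_eq0 opprK; apply/eqP.
transitivity (\sum_b0 x b0 * \sum_b2 (\sum_(b1 in D | cell r b1 b2) r b0 b1 b2)
                                  * (gamma r a b2 b b'')%:~R).
  by apply: eq_bigr => b0 _; rewrite -(key b0 P1a P2a P3r np).
under [RHS]eq_bigr do rewrite ffunE mulr_suml.
rewrite exchange_big /=; apply: eq_bigr => b0 _; rewrite mulr_sumr.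
by apply: eq_bigr => b2 _; rewrite mulrA.
Qed.
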